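(* Let $n\ge 1$, $k\ge 1$, and let $\mathcal P(n,1,1)$ be the set of lattice paths with steps $U=(1,1)$ and $D=(1,-1)$ from $(0,0)$ to $(2n+1,1)$. For each $j=1,2,\dots,2n+1$, the number of paths in $\mathcal P(n,1,1)$ with exactly $k$ circular peaks and exactly $j$ vertices on or below the $x$-axis is independent of $j$ and equals $$\frac{1}{2n+1}\left(\binom{n}{k-1}\binom{n}{k}+\binom{n+1}{k}\binom{n-1}{k-1}\right).$$
   Context: A peak of a path is an occurrence of two consecutive steps $UD$. The circular peaks of a path $p\in\mathcal P(n,1,1)$ are all its peaks, together with its initial vertex in the case that $p$ starts with a down step and ends with an up step. A vertex is on or below the $x$-axis if its $y$-coordinate is $\le 0$. *)

(* Defs.v *)
From mathcomp Require Import all_boot all_order all_algebra.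
Set Implicit Arguments. Unset Strict Implicit. Unset Printing Implicit Defensive.
Import GRing.Theory Num.Theory.

(* A lattice path of length m is a sequence of m steps; true = U = (1,1),
   false = D = (1,-1). *)

(* P(n,1,1): paths from (0,0) to (2n+1,1), i.e. 2n+1 steps with n+1 up steps. *)
Definition P_n11 (n : nat) (p : (2 * n + 1).-tuple bool) : bool :=
  count id p == n.+1.

Definition height (s : seq bool) (i : nat) : int :=
  (count id (take i s))%:Z - (count negb (take i s))%:Z.

Definition vertices_le0 (s : seq bool) : nat :=
  count (fun i => (height s i <= 0)%R) (iota 0 (size s).+1).

Definition peaks (s : seq bool) : nat :=
  count (fun i => nth false s i && ~~ nth false s i.+1) (iota 0 (size s).-1).

Definition circular_peaks (s : seq bool) : nat :=
  peaks s + ((~~ head true s) && last false s : nat).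

(* Main.v *)
Require Import Defs.
From mathcomp Require Import all_boot all_order all_algebra.
From mathcomp Require Import zify ring.
Import Order.TTheory GRing.Theory Num.Theory.
Set Implicit Arguments. Unset Strict Implicit. Unset Printing Implicit Defensive.

Definition UD (pr : bool * bool) : bool := pr.1 && ~~ pr.2.
Definition pz (s : seq bool) : nat := count UD (zip s (behead s)).

Lemma peaks_pz s : peaks s = pz s.
Proof.
rewrite /peaks /pz; elim: s => [//|x t IH] /=.
case: t IH => [//|y t'] /= IH.
rewrite -IH -(addn0 1) iotaDl count_map /=; congr (_ + _).
Qed.

Lemma count_zip_rcons f w g :
  count UD (zip (f :: w) (rcons w g)) = count UD (zip (f :: w) w) + (last f w && ~~ g).
Proof.
elim: w f => [|y w IH] f /=; first by rewrite addn0 add0n.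
by rewrite IH addnA.
Qed.

Definition cyc (s : seq bool) := count UD (zip s (rot 1 s)).

Lemma circ_cyc s : s != [::] -> circular_peaks s = cyc s.
Proof.
case: s => [//|f w] _; rewrite /circular_peaks /cyc rot1_cons count_zip_rcons peaks_pz /pz /=.
by rewrite andbC.
Qed.

Lemma circ_cons f w : circular_peaks (f :: w) = pz (f :: w) + (~~ f && last f w).
Proof. by rewrite /circular_peaks peaks_pz. Qed.

Lemma zip_drop (s t : seq bool) r : zip (drop r s) (drop r t) = drop r (zip s t).
Proof.
elim: r s t => [|r IH] [|x s] [|y t] //=.
all: try by rewrite IH.
all: by case: drop.
Qed.

Lemma zip_take (s t : seq bool) r : zip (take r s) (take r t) = take r (zip s t).
Proof. elim: r s t => [|r IH] [|x s] [|y t] //=; by rewrite IH. Qed.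

Lemma zip_rot (s t : seq bool) r : size s = size t ->
  zip (rot r s) (rot r t) = rot r (zip s t).
Proof.
move=> e; rewrite /rot zip_cat ?size_drop ?e // zip_drop zip_take.
by [].

Qed.

Lemma cyc_rot s r : cyc (rot r s) = cyc s.
Proof.
rewrite /cyc rot_rot zip_rot ?size_rot //.
by apply/permP; rewrite perm_rot.
Qed.

Lemma count_rot (P : pred bool) s r : count P (rot r s) = count P s.
Proof. by apply/permP; rewrite perm_rot. Qed.

Local Open Scope ring_scope.

Lemma phi_ge (L a b : nat) (x y : int) : (b <= a)%N -> (a < L)%N ->
  (L%:Z * x - a%:Z <= L%:Z * y - b%:Z) = (x - y <= 0).
Proof. move=> h1 h2; apply/idP/idP => h; nia. Qed.

Lemma phi_lt (L a b : nat) (x y : int) : (a < b)%N -> (b < L)%N ->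
  (L%:Z * x - a%:Z <= L%:Z * y - b%:Z) = (1 + x - y <= 0).
Proof. move=> h1 h2; apply/idP/idP => h; nia. Qed.

Lemma phi_inj (L a b : nat) (x y : int) : (a < L)%N -> (b < L)%N ->
  L%:Z * x - a%:Z = L%:Z * y - b%:Z -> a = b.
Proof.
move=> h1 h2 h; have hxy : x = y.
  case: (ltgtP x y) => // hh; exfalso.
  - have : L%:Z * (y - x) >= L%:Z by rewrite -{1}(mulr1 L%:Z) ler_wpM2l //; lia.
    lia.
  - have : L%:Z * (x - y) >= L%:Z by rewrite -{1}(mulr1 L%:Z) ler_wpM2l //; lia.
    lia.
subst; lia.
Qed.

Lemma height_cat_le a b i : (i <= size a)%N -> height (a ++ b) i = height a i.
Proof.
move=> h; rewrite /height take_cat; case: ltnP => h2 //.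
have -> : i = size a by apply/eqP; rewrite eqn_leq h h2.
by rewrite subnn take0 cats0 take_size.
Qed.

Lemma height_cat_ge a b i : (size a <= i)%N ->
  height (a ++ b) i = height a (size a) + height b (i - size a).
Proof.
move=> h; rewrite /height take_cat ltnNge h /= take_size !count_cat !PoszD.
ring.
Qed.

Lemma height_drop s r i : height (drop r s) i = height s (r + i) - height s r.
Proof.
rewrite /height take_drop.
rewrite [in X in _ = X - _](addnC r i).
have e P : count P (take (i + r) s) = (count P (take r s) + count P (drop r (take (i+r) s)))%N.
  by rewrite -{1}(cat_take_drop r (take (i+r) s)) count_cat take_takel ?leq_addl.
rewrite !e !PoszD; ring.
Qed.

Lemma height_take s r i : (i <= r)%N -> height (take r s) i = height s i.
Proof. by move=> h; rewrite /height take_takel. Qed.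

Lemma height_size_rot s r : height (rot r s) (size s) = height s (size s).
Proof.
rewrite /height -(size_rot r s) take_size size_rot take_size.
by congr (_ - _); congr Posz; apply/permP; rewrite perm_rot.
Qed.

Definition phi (s : seq bool) (t : nat) : int := (size s)%:Z * height s t - t%:Z.

Lemma Vrot s r : (r < size s)%N -> height s (size s) = 1 ->
  vertices_le0 (rot r s) = count (fun t => phi s t <= phi s r) (iota 0 (size s)).
Proof.
move=> hr hL.
rewrite /vertices_le0 size_rot -addn1 iotaD count_cat /= height_size_rot hL (_ : (1 <= 0 :> int) = false) // /= addn0.
have C1 : iota 0 (size s) = iota 0 (size s - r) ++ iota (size s - r) r.
  by rewrite -iotaD subnK // ltnW.
have C2 : iota 0 (size s) = iota 0 r ++ iota r (size s - r).
  by rewrite -iotaD subnKC // ltnW.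
have A : count (fun i => height (rot r s) i <= 0) (iota 0 (size s - r)) =
         count (fun t => phi s t <= phi s r) (iota r (size s - r)).
  rewrite (_ : iota r (size s - r) = map (addn r) (iota 0 (size s - r))); last by rewrite -iotaDl addn0.
  rewrite count_map; apply: eq_in_count => i.
  rewrite mem_iota add0n => /andP[_ hi] /=.
  rewrite /rot height_cat_le ?size_drop; last exact: ltnW.
  rewrite height_drop /phi phi_ge ?leq_addr //; lia.
have B : count (fun i => height (rot r s) i <= 0) (iota (size s - r) r) =
         count (fun t => phi s t <= phi s r) (iota 0 r).
  rewrite (_ : iota (size s - r) r = map (addn (size s - r)) (iota 0 r)); last by rewrite -iotaDl addn0.
  rewrite count_map; apply: eq_in_count => i.
  rewrite mem_iota add0n => /andP[_ hi] /=.
  rewrite /rot height_cat_ge size_drop ?leq_addr // addKn height_drop height_take; last exact: ltnW.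
  rewrite subnKC; last exact: ltnW.
  rewrite hL /phi phi_lt //.
  by rewrite addrAC.
by rewrite [in LHS]C1 [in RHS]C2 !count_cat A B addn0 addnC.
Qed.

Local Close Scope ring_scope.

Lemma count_lt (T : eqType) (P Q : pred T) s x0 :
  subpred P Q -> x0 \in s -> Q x0 -> ~~ P x0 -> count P s < count Q s.
Proof.
move=> sPQ; elim: s => [//|x s IH]; rewrite inE => /orP[/eqP <-|hin] Qx nPx /=.
  rewrite Qx (negbTE nPx) add0n add1n ltnS; exact: sub_count.
have := IH hin Qx nPx; case Px: (P x); first rewrite (sPQ _ Px).
  by rewrite !add1n ltnS.
by case: (Q x) => /=; lia.
Qed.

Definition rk (s : seq bool) (r : nat) := count (fun t => (phi s t <= phi s r)%R) (iota 0 (size s)).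

Lemma rk_pos s r : r < size s -> 0 < rk s r.
Proof. move=> h; rewrite /rk -has_count; apply/hasP; exists r => //; by rewrite mem_iota. Qed.

Lemma rk_le s r : rk s r <= size s.
Proof. by rewrite /rk (leq_trans (count_size _ _)) // size_iota. Qed.

Lemma rk_inj s a b : a < size s -> b < size s -> rk s a = rk s b -> a = b.
Proof.
move=> ha hb e.
case: (ltgtP (phi s a) (phi s b)) => h.
- have : rk s a < rk s b.
    apply: (count_lt (x0 := b)) => //; last by rewrite -ltNge.
    + by move=> t /= ht; exact: le_trans ht (ltW h).
    + by rewrite mem_iota.
  by rewrite e ltnn.
- have : rk s b < rk s a.
    apply: (count_lt (x0 := a)) => //; last by rewrite -ltNge.
    + by move=> t /= ht; exact: le_trans ht (ltW h).
    + by rewrite mem_iota.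
  by rewrite e ltnn.
- exact: (phi_inj ha hb h).
Qed.

Lemma rank_unique s (hL : height s (size s) = 1%R) j : 0 < size s -> 1 <= j <= size s ->
  \sum_(r < size s) (vertices_le0 (rot r s) == j : nat) = 1.
Proof.
move=> L0 /andP[j1 jL].
rewrite (eq_bigr (fun r : 'I_(size s) => (rk s r == j) : nat)); last first.
  by move=> r _; rewrite Vrot.
have gP (r : 'I_(size s)) : (rk s r).-1 < size s.
  have := rk_pos (ltn_ord r); have := rk_le s r; lia.
pose g (r : 'I_(size s)) : 'I_(size s) := Ordinal (gP r).
have g_inj : injective g.
  move=> a b /(f_equal val) /= e; apply: val_inj; apply: rk_inj; [exact: ltn_ord|exact: ltn_ord|].
  by rewrite -(prednK (rk_pos (ltn_ord a))) -(prednK (rk_pos (ltn_ord b))) e.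
have jP : j.-1 < size s by lia.
pose j' : 'I_(size s) := Ordinal jP.
have -> : \sum_(r < size s) (rk s r == j : nat) = \sum_(r < size s) (g r == j' : nat).
  apply: eq_bigr => r _; congr nat_of_bool; apply/eqP/eqP => [e|/(f_equal val) /= e].
    by apply: val_inj; rewrite /= e.
  have := rk_pos (ltn_ord r); lia.
transitivity (\sum_(r < size s) (r == j' : nat)).
  by rewrite [in RHS](reindex_inj g_inj).
rewrite (bigD1 j') //= eqxx big1 // => i /negbTE -> //.
Qed.

Fixpoint words m : seq (seq bool) :=
  if m is m'.+1 then [seq true :: w | w <- words m'] ++ [seq false :: w | w <- words m']
  else [:: [::]].

Lemma mem_words m s : (s \in words m) = (size s == m).
Proof.
elim: m s => [|m IH] [|x s] //=; rewrite mem_cat.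
- by apply/orP => -[] /mapP [].
- case: x; rewrite eqSS -IH.
  + rewrite mem_map ?orbF; last by move=> a b [].
    by apply/orP/idP => [[//|/mapP [] ? _ //]|]; left.
  + rewrite mem_map; last by move=> a b [].
    by apply/orP/idP => [[/mapP [] ? _ //|//]|]; right.
Qed.

Lemma words_uniq m : uniq (words m).
Proof.
elim: m => [//|m IH] /=; rewrite cat_uniq !map_inj_uniq //; try by move=> a b [].
rewrite IH andbT; apply/hasP => -[x /mapP [w _ ->] /mapP [] //].
Qed.

Lemma sum_tuple_count m (F : pred (seq bool)) :
  \sum_(p : m.-tuple bool) (F p : nat) = count F (words m).
Proof.
rewrite -big_enum -(big_map val xpredT (fun s => F s : nat)).
have -> : count F (words m) = count F (map val (enum {: m.-tuple bool})).
  apply/permP; apply: uniq_perm.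
  - exact: words_uniq.
  - by rewrite map_inj_uniq ?enum_uniq //; exact: val_inj.
  - move=> s; rewrite mem_words; apply/idP/mapP => [/eqP e|[t _ ->]].
      by exists (Tuple (introT eqP e)); rewrite ?mem_enum.
    by rewrite size_tuple.
elim: (map val _) => [|x l IH]; by rewrite ?big_nil ?big_cons //= IH.
Qed.

Fixpoint Cm (a r : nat) : nat :=
  match a, r with
  | 0, 0 => 1
  | 0, _ => 0
  | _.+1, 0 => 0
  | a'.+1, r'.+1 => Cm a' r'.+1 + Cm a' r'
  end.

Lemma Cm0r r : Cm 0 r = (r == 0). Proof. by case: r. Qed.
Lemma Cma0 a : Cm a 0 = (a == 0). Proof. by case: a. Qed.
Lemma CmS a r : Cm a.+1 r.+1 = Cm a r.+1 + Cm a r. Proof. by []. Qed.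

Lemma CmC a r : Cm a.+1 r.+1 = 'C(a, r).
Proof.
elim: a r => [|a IH] r; first by rewrite CmS Cm0r Cm0r bin0n; case: r.
rewrite CmS IH; case: r => [|r]; first by rewrite Cma0 bin0 addn0.
by rewrite IH binS.
Qed.

Definition Q m u k (f l : bool) := count (fun w =>
  [&& count id (f :: w) == u, pz (f :: w) == k & last f w == l]) (words m).
Definition CF m u k (f l : bool) := ((u <= m.+1) * Cm u (k + l) * Cm (m.+1 - u) (k + ~~ f))%N.

Lemma addb_eq (a : bool) x u : (a + x == u) = (a <= u) && (x == u - a).
Proof. case: a => /=; last by rewrite add0n subn0. by case: u => [|u] //; rewrite add1n eqSS subSS subn0. Qed.

Lemma pz_cons2 f g w : pz [:: f, g & w] = (f && ~~ g) + pz (g :: w).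
Proof. by []. Qed.

Lemma Q_step m u k f l g :
  count (fun w => [&& count id (f :: g :: w) == u, pz (f :: g :: w) == k
                    & last f (g :: w) == l]) (words m)
  = if (f <= u) && ((f && ~~ g) <= k) then Q m (u - f) (k - (f && ~~ g)) g l else 0.
Proof.
case: ifP => h.
  apply: eq_count => w; rewrite pz_cons2 /= addb_eq (addb_eq (f && ~~g)).
  by case/andP: h => -> ->.
rewrite -(count_pred0 (words m)); apply: eq_count => w.
rewrite pz_cons2 /= addb_eq (addb_eq (f && ~~g)).
by move: h; case: (f <= u); case: (_ <= k) => //= _; rewrite ?andbF.
Qed.

Lemma Q_CF m u k f l : Q m u k f l = CF m u k f l.
Proof.
elim: m u k f => [|m IH] u k f.
  rewrite /Q /CF /= /pz /=.
  case: f; case: l; case: u => [|[|u]]; case: k => [|k] //=;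
  by rewrite ?addn0 ?addn1 ?addSn ?Cm0r ?Cma0 ?muln0 ?mul0n.
rewrite /Q [words m.+1]/= count_cat !count_map.
rewrite (Q_step m u k f l true) (Q_step m u k f l false) !IH /CF.
clear IH; case: f => /=.
- case: u => [|u] /=.
    by case: k => [|k]; case: l.
  rewrite subn1 /= subSS !ltnS.
  case: k => [|k] /=.
    rewrite addn0 !add0n !Cma0 /=.
    case: (boolP (m.+1 - u == 0)) => hu; last by rewrite !muln0.
    case: (leqP u m.+1) => hu2 /=; last by rewrite !mul0n.
    have eu : u = m.+1 by move/eqP: hu; lia.
    subst u; case: l => //=.
    by rewrite addn0.
  rewrite !subn0 subn1 /= ?addn0 ?addn1 addSn.
  ring.
- rewrite !subn0 !addn0.
  case: (ltngtP u m.+2) => hu.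
  + rewrite ltnS in hu; rewrite hu (subSn hu) addn1 CmS; ring.
  + by have -> : (u <= m.+1) = false by lia.
  + subst u; have -> : (m.+2 <= m.+1) = false by lia.
    by rewrite subnn Cm0r addn1 muln0.
Qed.

Lemma count_split (T : Type) (P R : pred T) s :
  count P s = count (fun x => P x && R x) s + count (fun x => P x && ~~ R x) s.
Proof. elim: s => //= x s ->; case: (P x); case: (R x) => /=; ring. Qed.

Lemma piece u k f l w : 0 < k ->
  ((count id (f :: w) == u) && (circular_peaks (f :: w) == k)) && (last f w == l) =
  [&& count id (f :: w) == u, pz (f :: w) == k - (~~ f && l) & last f w == l].
Proof.
move=> hk; rewrite circ_cons; case: (last f w =P l) => [->|_]; last by rewrite !andbF.
case: (count id _ == u) => //=; rewrite !andbT addnC addb_eq.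
by rewrite (leq_trans _ hk) // leq_b1.
Qed.

Lemma count_f m u k f : 0 < k ->
  count (fun w => (count id (f :: w) == u) && (circular_peaks (f :: w) == k)) (words m)
  = Q m u (k - (~~ f && true)) f true + Q m u (k - (~~ f && false)) f false.
Proof.
move=> hk; rewrite (count_split _ (fun w => last f w == true)).
congr (_ + _); apply: eq_count => w /=; first by rewrite piece.
by rewrite -piece //; case: (last f w).
Qed.

Lemma total_count n k : 0 < n -> 0 < k ->
  count (fun s => (count id s == n.+1) && (circular_peaks s == k)) (words (2 * n + 1))
  = 'C(n, k.-1) * 'C(n, k) + 'C(n.+1, k) * 'C(n.-1, k.-1).
Proof.
move=> hn hk; rewrite addn1 [words _.+1]/= count_cat !count_map.
rewrite !count_f // !Q_CF /CF.
case: n hn => [//|n] _; case: k hk => [//|k] _.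
rewrite -[~~ true]/false -[~~ false]/true !andbT !andbF.
rewrite -[nat_of_bool false]/0 -[nat_of_bool true]/1.
have -> : (2 * n.+1).+1 - n.+2 = n.+1 by lia.
have -> : n.+1 < (2 * n.+1).+1 by lia.
rewrite !subn0 subSS subn0 !addn0 !addn1 !CmC -[k.+1.-1]/k -[n.+1.-1]/n.
rewrite -[nat_of_bool true]/1 !mul1n (binS n.+1 k) !(binS n k); ring.
Qed.

Lemma card_sum (T : finType) (P : pred T) : #|[set p | P p]| = \sum_p (P p : nat).
Proof.
rewrite cardsE -sum1_card big_mkcond /=; apply: eq_bigr => i _.
by rewrite unfold_in; case: (P i).
Qed.

Lemma height_full s u : size s = (2 * u + 1)%N -> count id s = u.+1 ->
  height s (size s) = 1%R.
Proof.
move=> hs hc; rewrite /height take_size.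
have := count_predC id s; rewrite hc hs => e.
have -> : count negb s = u by have e2 : count negb s = count (predC id) s by [] ; lia.
by rewrite -addn1 PoszD addrAC subrr add0r.
Qed.

Theorem theorem8 (n k j : nat) (hn : 1 <= n) (hk : 1 <= k)
  (hj1 : 1 <= j) (hj2 : j <= 2 * n + 1) :
  (#|[set p : (2 * n + 1).-tuple bool |
       [&& P_n11 p, circular_peaks p == k & vertices_le0 p == j]]|%:R : rat)
  = (1 / (2 * n + 1)%:R *
     ('C(n, k.-1) * 'C(n, k) + 'C(n.+1, k) * 'C(n.-1, k.-1))%:R)%R.
Proof.
set L := (2 * n + 1)%N.
pose A (p : L.-tuple bool) := P_n11 p && (circular_peaks p == k).
have A_rot (r : nat) p : A (rot_tuple r p) = A p.
  rewrite /A /P_n11 /= count_rot; congr andb.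
  have ne : forall q : L.-tuple bool, (q : seq bool) != [::].
    by move=> q; rewrite -size_eq0 size_tuple /L addn1.
  by rewrite !circ_cyc ?ne // cyc_rot.
have rot_inj_t (r : nat) : injective (fun p : L.-tuple bool => rot_tuple r p).
  by move=> p q /(f_equal val) /= /rot_inj /val_inj.
pose X := \sum_(p : L.-tuple bool) \sum_(r < L) (A p && (vertices_le0 (rot r p) == j) : nat).
have E1 : X = \sum_(p : L.-tuple bool) (A p : nat).
  apply: eq_bigr => p _; case: (boolP (A p)) => Ap /=; last by rewrite big1.
  have hc : count id p = n.+1 by move: Ap; rewrite /A /P_n11 => /andP [/eqP].
  have hL := height_full (size_tuple p) hc.
  have := rank_unique hL (j := j); rewrite size_tuple => -> //.
  by rewrite /L addn1.
  by rewrite hj1 hj2.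
have E2 : X = (L * #|[set p : L.-tuple bool |
       [&& P_n11 p, circular_peaks p == k & vertices_le0 p == j]]|)%N.
  rewrite /X exchange_big /= card_sum.
  rewrite (eq_bigr (fun _ => \sum_(q : L.-tuple bool) ((A q && (vertices_le0 q == j)) : nat))).
    by rewrite sum_nat_const card_ord; congr muln; apply: eq_bigr => q _; rewrite /A andbA.
  move=> r _.
  rewrite [in RHS](reindex_inj (rot_inj_t r)) /=.
  by apply: eq_bigr => p _; rewrite A_rot.
have E3 : \sum_(p : L.-tuple bool) (A p : nat) =
          ('C(n, k.-1) * 'C(n, k) + 'C(n.+1, k) * 'C(n.-1, k.-1))%N.
  rewrite -(total_count hn hk).
  by rewrite -sum_tuple_count.
rewrite -E3 -E1 E2 natrM mulrA div1r mulVf ?mul1r //.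
by rewrite pnatr_eq0 /L addn1.
Qed.
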